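(* Let $\Lambda$ be a closed convex subset of $[0,\infty)$ containing $0$, let $\Lambda_0=\Lambda\cap\mathbb N$ (with $0\in\mathbb N$), and assume that if $\sup\Lambda$ is finite then $\sup\Lambda\in\Lambda_0$. Let $\ell$ be an invariant pseudo-norm on a group $G$ with range exactly $\Lambda_0$. If $(G,\ell)$ is metrically LE$\mathcal C$ for $\mathcal C$ the class of finite groups with invariant $\Lambda$-valued pseudo-norms, then $(G,\ell)$ is metrically LE$\mathcal C_0$ for $\mathcal C_0$ the class of finite groups with invariant pseudo-norms taking values in $\Lambda_0$. The same holds with ''invariant'' omitted throughout.
   Context: A pseudo-norm on $G$ is $\ell:G\to\Lambda$ with $\ell(1)=0$, $\ell(g)=\ell(g^{-1})$, $\ell(gh)\le\ell(g)+\ell(h)$; invariant if $\ell(h^{-1}gh)=\ell(g)$. For pseudo-normed groups $(G_1,\ell_1),(G_2,\ell_2)$, finite $D\subseteq G_1$ and finite $Q\subseteq\Lambda\cap\mathbb Q$ with $0\in Q$, a map $\varphi:G_1\to G_2$ is a $D$-$Q$-almost-homomorphism if it is injective on $D$, $\varphi(hg)=\varphi(h)\varphi(g)$ whenever $h,g,hg\in D$, and $\ell_1(g)\,\square\,q\iff\ell_2(\varphi(g))\,\square\,q$ for all $g\in D$, $q\in Q$, $\square\in\{<,>,=\}$. For a class $\mathcal C$ of pseudo-normed groups, $(G,\ell)$ is metrically LE$\mathcal C$ if for every such $D,Q$ there are $(C,\ell_C)\in\mathcal C$ and a $D$-$Q$-almost-homomorphism $(G,\ell)\to(C,\ell_C)$.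 *)

(* Defs.v *)
From HB Require Import structures.
From mathcomp Require Import all_boot all_order all_algebra all_fingroup.
From mathcomp Require Import all_classical all_reals all_analysis.

Set Implicit Arguments.
Unset Strict Implicit.
Unset Printing Implicit Defensive.

Import Order.TTheory GRing.Theory Num.Theory.
Local Open Scope classical_set_scope.
Local Open Scope ring_scope.

Section PseudoNorms.
Variable R : realType.

Definition pseudo_norm (G : groupType) (l : G -> R) : Prop :=
  [/\ l 1%g = 0,
      forall g : G, l g = l (g^-1)%g
    & forall g h : G, l (g * h)%g <= l g + l h].

Definition invariant_pn (G : groupType) (l : G -> R) : Prop :=
  forall g h : G, l (h^-1 * g * h)%g = l g.

Definition almost_hom (G1 G2 : groupType) (l1 : G1 -> R) (l2 : G2 -> R)
  (D : seq G1) (Q : seq rat) (phi : G1 -> G2) : Prop :=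
  [/\ (forall x y, x \in D -> y \in D -> phi x = phi y -> x = y),
      (forall h g, h \in D -> g \in D -> (h * g)%g \in D ->
          phi (h * g)%g = (phi h * phi g)%g)
    & (forall g q, g \in D -> q \in Q ->
          [/\ (l1 g < ratr q <-> l2 (phi g) < ratr q),
              (l1 g > ratr q <-> l2 (phi g) > ratr q)
            & (l1 g = ratr q <-> l2 (phi g) = ratr q)])].

Definition metrically_LE (Lam : set R)
  (C : forall H : finGroupType, (H -> R) -> Prop)
  (G : groupType) (l : G -> R) : Prop :=
  forall (D : seq G) (Q : seq rat),
    (forall q, q \in Q -> Lam (ratr q)) -> (0 : rat) \in Q ->
    exists (H : finGroupType) (lH : H -> R),
      C H lH /\ exists phi : G -> H, almost_hom l lH D Q phi.

Definition nat_part (Lam : set R) : set R :=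
  fun r => Lam r /\ exists n : nat, r = n%:R.

Definition convex_set_R (Lam : set R) : Prop :=
  forall x y t, Lam x -> Lam y -> 0 <= t <= 1 -> Lam (t * x + (1 - t) * y).

Definition fin_pn_class (S : set R) (inv : bool) :
  forall H : finGroupType, (H -> R) -> Prop :=
  fun H lH => [/\ pseudo_norm lH, (inv -> invariant_pn lH)
                & forall x, S (lH x)].

End PseudoNorms.

(* Main.v *)
Require Import Defs.
From HB Require Import structures.
From mathcomp Require Import all_boot all_order all_algebra all_fingroup.
From mathcomp Require Import all_classical all_reals all_analysis.
From mathcomp Require Import zify.
Import Order.TTheory GRing.Theory Num.Theory numFieldNormedType.Exports.
Local Open Scope classical_set_scope.
Local Open Scope ring_scope.

Section Aux.
Variable R : realType.

Lemma lam_between (Lam : set R) q c :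
  convex_set_R Lam -> Lam 0 -> Lam q -> 0 <= c <= q -> Lam c.
Proof.
move=> cv L0 Lq /andP[c0 cq].
have [q0|qn0] := eqVneq q 0.
  have -> : c = 0 by apply/eqP; rewrite eq_le c0 andbT -q0.
  by [].
have qp : 0 < q by rewrite lt_def qn0 (le_trans c0 cq).
have := cv q 0 (c / q) Lq L0.
rewrite mulr0 addr0 mulfVK //; apply.
apply/andP; split; first by rewrite divr_ge0 // ltW.
by rewrite ler_pdivrMr // mul1r.
Qed.

Lemma ltr_ratz (q : rat) (z : int) : (ratr q < (z%:~R : R)) = (Num.floor q < z).
Proof. by rewrite -(ratr_int R z) ltr_rat floor_lt_int. Qed.

Lemma ltr_zrat (q : rat) (z : int) : ((z%:~R : R) < ratr q) = (z < Num.ceil q).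
Proof. by rewrite -(ratr_int R z) ltr_rat ceil_gt_int. Qed.

Lemma int_key (q : rat) (zn zm : int) :
  0 <= q -> 0 <= zn -> 0 <= zm ->
  (Num.floor q < zm) = (Num.floor q < zn) ->
  (Num.max 0 (Num.ceil q - 1) < zm) = (Num.max 0 (Num.ceil q - 1) < zn) ->
  [/\ ((zn%:~R : R) < ratr q <-> (zm%:~R : R) < ratr q),
      ((zn%:~R : R) > ratr q <-> (zm%:~R : R) > ratr q)
    & ((zn%:~R : R) = ratr q <-> (zm%:~R : R) = ratr q)].
Proof.
move=> q0 zn0 zm0 hf hc.
have e1 : (zn < Num.ceil q) = (zm < Num.ceil q).
  case: (leP 0 (Num.ceil q - 1)) => hq.
    move: hc; rewrite (max_r hq) => hc.
    apply/idP/idP => h; apply: contraTT h; rewrite -!leNgt => h.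
      have : Num.ceil q - 1 < zm by lia.
      by rewrite hc; lia.
    have : Num.ceil q - 1 < zn by lia.
    by rewrite -hc; lia.
  by apply/idP/idP => h; lia.
have A : ((zn%:~R : R) < ratr q) <-> ((zm%:~R : R) < ratr q).
  by rewrite !ltr_zrat e1.
have B : ((zn%:~R : R) > ratr q) <-> ((zm%:~R : R) > ratr q).
  by rewrite !ltr_ratz hf.
split => //.
split => e.
  apply/eqP; rewrite eq_le !leNgt; apply/andP; split.
    by apply/negP => /B; rewrite e ltxx.
  by apply/negP => /A; rewrite e ltxx.
apply/eqP; rewrite eq_le !leNgt; apply/andP; split.
  by apply/negP => /B; rewrite e ltxx.
by apply/negP => /A; rewrite e ltxx.
Qed.

Definition flq (q : rat) : rat := (Num.floor q)%:~R.
Definition cmq (q : rat) : rat := (Num.max 0 (Num.ceil q - 1))%:~R.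

Lemma main_gen (Lam : set R) (inv : bool) :
  convex_set_R Lam ->
  Lam `<=` [set x | 0 <= x] ->
  Lam 0 ->
  (has_ubound Lam -> nat_part Lam (sup Lam)) ->
  forall (G : groupType) (l : G -> R),
      (forall r, (exists g, l g = r) <-> nat_part Lam r) ->
      metrically_LE Lam (fin_pn_class Lam inv) l ->
      metrically_LE Lam (fin_pn_class (nat_part Lam) inv) l.
Proof.
move=> cv Lpos L0 hsup G l hrange hLE D Q QL Q0.
pose Q' := Q ++ map flq Q ++ map cmq Q.
have QL' : forall q, q \in Q' -> Lam (ratr q).
  move=> q; rewrite !mem_cat => /or3P[/QL //| /mapP[p pQ ->] | /mapP[p pQ ->]].
    have Lp := QL p pQ; have p0 : 0 <= ratr p :> R := Lpos _ Lp.
    have p0' : 0 <= p by move: p0; rewrite -(ler_rat R) rmorph0.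
    have := @lam_between Lam (ratr p) (ratr (flq p)) cv L0 Lp; apply; rewrite /flq ratr_int.
    by rewrite ler0z floor_ge0 p0' /= -(ratr_int R) ler_rat floor_le.
  have Lp := QL p pQ; have p0 : 0 <= ratr p :> R := Lpos _ Lp.
  have p0' : 0 <= p by move: p0; rewrite -(ler_rat R) rmorph0.
  have := @lam_between Lam (ratr p) (ratr (cmq p)) cv L0 Lp; apply; rewrite /cmq ratr_int.
  case: (leP 0 (Num.ceil p - 1)) => hq.
    rewrite ler0z hq /= -(ratr_int R) ler_rat.
    by apply: ltW; apply: ceilB1_lt.
  by apply/andP; split.
have Q0' : (0 : rat) \in Q' by rewrite mem_cat Q0.
have [H [lH [[pnH invH rngH] [phi [inj hom cmp]]]]] := hLE D Q' QL' Q0'.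
pose lH' := fun h : H => (Num.ceil (lH h))%:~R : R.
have lH0 : forall h, 0 <= lH h by move=> h; apply: Lpos; apply: rngH.
exists H, lH'; split; last (exists phi; split => //); first apply: And3.
- case: pnH => p1 p2 p3; apply: And3.
  + by rewrite /lH' p1 ceil0.
  + by move=> g; rewrite /lH' p2.
  + move=> g h; rewrite /lH' -intrD ler_int ceil_le_int intrD.
    apply: (le_trans (p3 g h)); apply: lerD; exact: ceil_ge.
- by move=> /invH hi g h; rewrite /lH' hi.
- move=> h; split; last first.
    exists `|Num.ceil (lH h)|%N; rewrite /lH'.
    by rewrite -[RHS]/(((Posz `|Num.ceil (lH h)|%N))%:~R) gez0_abs // ceil_ge0;
       apply: lt_le_trans (lH0 h); rewrite ltrN10.
  have c0 : 0 <= (Num.ceil (lH h))%:~R :> R.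
    by rewrite ler0z ceil_ge0; apply: lt_le_trans (lH0 h); rewrite ltrN10.
  have [z [Lz zge]] : exists z, Lam z /\ lH' h <= z.
    have [hub|nub] := pselect (has_ubound Lam).
      have [Ls [k sk]] := hsup hub.
      exists (sup Lam); split => //; rewrite sk /lH'.
      rewrite -[k%:R]/((Posz k)%:~R) ler_int ceil_le_int.
      apply: (le_trans (ub_le_sup hub (rngH h))); rewrite sk; exact: lexx.
    apply: contrapT => nex; apply: nub; exists (lH' h) => z Lz.
    rewrite leNgt; apply/negP => hz; apply: nex; exists z; split => //.
    exact: ltW.
  by apply: (@lam_between Lam z (lH' h) cv L0 Lz); rewrite c0.
- move=> g q gD qQ.
  have [_ [n ln]] : nat_part Lam (l g) by apply/hrange; exists g.
  have q0 : 0 <= q.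
    by have := Lpos _ (QL q qQ); rewrite /= -(ler_rat R) rmorph0.
  have hq := fun p (pQ : p \in Q') => cmp g p gD pQ.
  have fQ : flq q \in Q' by rewrite !mem_cat map_f ?orbT.
  have cQ : cmq q \in Q' by rewrite !mem_cat map_f ?orbT.
  have [_ hf _] := hq (flq q) fQ.
  have [_ hc _] := hq (cmq q) cQ.
  set x := lH (phi g) in hf hc *.
  have x0 : 0 <= x by apply: lH0.
  rewrite /lH' -/x ln -[n%:R]/((Posz n)%:~R).
  rewrite ln -[n%:R]/((Posz n)%:~R) /flq /cmq !ratr_int in hf hc.
  apply: int_key => //.
    by rewrite ceil_ge0; apply: lt_le_trans x0; rewrite ltrN10.
  - apply/idP/idP => h.
      rewrite -(ltr_int R); apply/hf; by rewrite -ceil_gt_int.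
    rewrite ceil_gt_int; apply/hf; by rewrite ltr_int.
  - apply/idP/idP => h.
      rewrite -(ltr_int R); apply/hc; by rewrite -ceil_gt_int.
    rewrite ceil_gt_int; apply/hc; by rewrite ltr_int.
Qed.
End Aux.

Theorem proposition2p7 (R : realType) (Lam : set R) :
  closed Lam ->
  convex_set_R Lam ->
  Lam `<=` [set x | 0 <= x] ->
  Lam 0 ->
  (has_ubound Lam -> nat_part Lam (sup Lam)) ->
  (* invariant version *)
  (forall (G : groupType) (l : G -> R),
      pseudo_norm l -> invariant_pn l ->
      (forall r, (exists g, l g = r) <-> nat_part Lam r) ->
      metrically_LE Lam (fin_pn_class Lam true) l ->
      metrically_LE Lam (fin_pn_class (nat_part Lam) true) l) /\
  (* version with "invariant" omitted throughout *)
  (forall (G : groupType) (l : G -> R),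
      pseudo_norm l ->
      (forall r, (exists g, l g = r) <-> nat_part Lam r) ->
      metrically_LE Lam (fin_pn_class Lam false) l ->
      metrically_LE Lam (fin_pn_class (nat_part Lam) false) l).
Proof.
move=> _ cv Lpos L0 hsup; split.
  by move=> G l _ _; apply: main_gen.
by move=> G l _; apply: main_gen.
Qed.
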